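(* Let $f \colon \mathbb{R}^2 \to \mathbb{R}$ be given by $f(u,v) = u^2 + |v|$. Then every BFGS sequence $((u_k,v_k))_{k\ge 0}$ for $f$ has a subsequence converging to a point of the line $\{(u,v) : v = 0\}$.
   Context: A sequence $(x_k)$ in $\mathbb{R}^n$ is a BFGS sequence for $f$ if $f$ is differentiable at each $x_k$ with $\nabla f(x_k) \neq 0$, and there exist parameters $0<\mu<\nu<1$ and a positive definite $n\times n$ matrix $H_0$ such that, with $s_k = x_{k+1}-x_k$, $y_k = \nabla f(x_{k+1}) - \nabla f(x_k)$, $V_k = I - \frac{s_k y_k^T}{s_k^T y_k}$ and $H_{k+1} = V_k H_k V_k^T + \frac{s_k s_k^T}{s_k^T y_k}$, one has for all $k=0,1,2,\dots$: $H_k \nabla f(x_k) \in -\mathbb{R}_+ s_k$, $f(x_{k+1}) \le f(x_k) + \mu \nabla f(x_k)^T s_k$, and $\nabla f(x_{k+1})^T s_k \ge \nu \nabla f(x_k)^T s_k$. *)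

(* Defs.v *)
From HB Require Import structures.
From mathcomp Require Import all_boot all_order all_algebra.
From mathcomp Require Import all_classical all_reals all_analysis.
Set Implicit Arguments. Unset Strict Implicit. Unset Printing Implicit Defensive.
Import Order.TTheory GRing.Theory Num.Theory.
Import numFieldNormedType.Exports.
Local Open Scope ring_scope.

Section BFGS.
Variables (R : realType) (n : nat).

(* Gradient of f at x: the column vector of partial derivatives, read off
   from the (Frechet) differential 'd f x on the standard basis. It is
   only meaningful when f is differentiable at x. *)
Definition grad (f : 'cV[R]_n -> R) (x : 'cV[R]_n) : 'cV[R]_n :=
  \col_i ('d f x (delta_mx i 0 : 'cV[R]_n)).

Definition dotv (u v : 'cV[R]_n) : R := (u^T *m v) 0 0.

Definition posdef (H : 'M[R]_n) : Prop :=
  H^T = H /\ forall z : 'cV[R]_n, z != 0 -> 0 < dotv z (H *m z).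

Definition bfgs_update (H : 'M[R]_n) (s y : 'cV[R]_n) : 'M[R]_n :=
  let V := 1%:M - (dotv s y)^-1 *: (s *m y^T) in
  V *m H *m V^T + (dotv s y)^-1 *: (s *m s^T).

Definition bfgs_s (x : nat -> 'cV[R]_n) (k : nat) := x k.+1 - x k.
Definition bfgs_y (f : 'cV[R]_n -> R) (x : nat -> 'cV[R]_n) (k : nat) :=
  grad f (x k.+1) - grad f (x k).

Fixpoint bfgs_H (f : 'cV[R]_n -> R) (x : nat -> 'cV[R]_n) (H0 : 'M[R]_n)
    (k : nat) : 'M[R]_n :=
  match k with
  | 0 => H0
  | k'.+1 => bfgs_update (bfgs_H f x H0 k') (bfgs_s x k') (bfgs_y f x k')
  end.

Definition BFGS_sequence (f : 'cV[R]_n -> R) (x : nat -> 'cV[R]_n) : Prop :=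
  (forall k, differentiable f (x k) /\ grad f (x k) != 0) /\
  exists (mu nu : R) (H0 : 'M[R]_n),
    [/\ 0 < mu, mu < nu, nu < 1, posdef H0 &
    forall k,
      let g := grad f (x k) in
      let s := bfgs_s x k in
      [/\ exists t : R, 0 <= t /\ bfgs_H f x H0 k *m g = - (t *: s),
          f (x k.+1) <= f (x k) + mu * dotv g s &
          dotv (grad f (x k.+1)) s >= nu * dotv g s]].

End BFGS.

Definition f_ex (R : realType) (p : 'cV[R]_2) : R :=
  (p 0 0) ^+ 2 + `|p 1 0|.

(* Main.v *)
Require Import Defs.
From HB Require Import structures.
From mathcomp Require Import all_boot all_order all_algebra.
From mathcomp Require Import all_classical all_reals all_analysis.
From mathcomp Require Import ring lra.
Import Order.TTheory GRing.Theory Num.Theory.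
Import numFieldNormedType.Exports.
Local Open Scope classical_set_scope.
Local Open Scope ring_scope.

Section S.
Variable R : realType.

Lemma dotv2 (a b : 'cV[R]_2) : dotv a b = a 0 0 * b 0 0 + a 1 0 * b 1 0.
Proof. rewrite /dotv !mxE !big_ord_recl big_ord0 !mxE /=.
have -> : lift ord0 ord0 = 1 :> 'I_2 by apply/val_inj.
by rewrite addr0.
Qed.

Lemma upd_entry (H : 'M[R]_2) (s y : 'cV[R]_2) (i j : 'I_2) :
  let r := (dotv s y)^-1 in
  let V := fun a b : 'I_2 => ((a == b)%:R - r * (s a 0 * y b 0)) in
  bfgs_update H s y i j =
  V i 0 * H 0 0 * V j 0 + V i 0 * H 0 1 * V j 1 + V i 1 * H 1 0 * V j 0 +
  V i 1 * H 1 1 * V j 1 + r * (s i 0 * s j 0).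
Proof.
move=> r V.
rewrite /bfgs_update /= !mxE; do 6 rewrite ?big_ord_recl ?big_ord0 ?mxE /=.
have -> : lift ord0 ord0 = 1 :> 'I_2 by apply/val_inj.
rewrite /V /r. ring.
Qed.


Lemma quot_e0 (p : 'cV[R]_2) (h : R) : h != 0 ->
  h^-1 *: ((@f_ex R \o shift p) (h *: (delta_mx 0 0 : 'cV[R]_2)) - f_ex p) = 2 * p 0 0 + h.
Proof.
move=> h0; rewrite /f_ex /= !mxE /= mulr1 mulr0 add0r -[_ *: _]/(_ * _).
by field.
Qed.

Lemma quot_e1 (p : 'cV[R]_2) (h : R) :
  h^-1 *: ((@f_ex R \o shift p) (h *: (delta_mx 1 0 : 'cV[R]_2)) - f_ex p) =
  h^-1 * (`|h + p 1 0| - `|p 1 0|).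
Proof.
rewrite /f_ex /= !mxE /= mulr1 mulr0 add0r -[_ *: _]/(_ * _).
congr (_ * _); ring.
Qed.

Lemma grad0 (p : 'cV[R]_2) : differentiable (@f_ex R) p ->
  grad (@f_ex R) p 0 0 = 2 * p 0 0.
Proof.
move=> dp; rewrite /grad mxE -deriveE //.
apply: cvg_lim => //.
apply: (@cvg_trans _ ((fun h => 2 * p 0 0 + h) @ 0^')).
  apply: near_eq_cvg; near=> h.
  rewrite quot_e0 //.
  near: h; exact: nbhs_dnbhs_neq.
apply: cvg_within_filter.
have H : (fun h => 2 * p 0 0 + h) @ (nbhs (0:R)) --> 2 * p 0 0 + 0.
  by apply: cvgD; [exact: cvg_cst | exact: cvg_id].
by rewrite addr0 in H.
Unshelve. all: by end_near.
Qed.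

Lemma grad1 (p : 'cV[R]_2) : differentiable (@f_ex R) p -> p 1 0 != 0 ->
  grad (@f_ex R) p 1 0 = Num.sg (p 1 0).
Proof.
move=> dp p0; rewrite /grad mxE -deriveE //.
apply: cvg_lim => //.
apply: cvg_near_cst.
have hp : 0 < `|p 1 0| by rewrite normr_gt0.
near=> h.
rewrite quot_e1.
have h0 : h != 0 by near: h; exact: nbhs_dnbhs_neq.
have hs : `|h| < `|p 1 0|.
  by near: h; apply: dnbhs0_lt.
have E : `|h + p 1 0| - `|p 1 0| = Num.sg (p 1 0) * h.
  move: hs; rewrite ltr_norml => /andP[hl hr].
  case: (ltrgt0P (p 1 0)) p0 hl hr => // pp _ hl hr.
    rewrite gtr0_sg // gtr0_norm ?mul1r; [ring | lra].
  rewrite ltr0_sg // ltr0_norm; [ring | lra].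
rewrite E; field.
Unshelve. all: by end_near.
Qed.

Lemma nondiff (p : 'cV[R]_2) : differentiable (@f_ex R) p -> p 1 0 != 0.
Proof.
move=> dp; apply/negP => /eqP p0.
have := @diff_derivable _ _ _ _ p (delta_mx 1 0) dp.
move=> /cvg_ex [l /cvgrPdist_lt /(_ 1 ltr01)].
rewrite near_withinE => /nbhs_ballP [e /= e0 He].
have e2 : 0 < e / 2 by lra.
have := He (e/2); have := He (-(e/2)).
rewrite /ball /= !sub0r !normrN !quot_e1 !p0 !addr0 normr0 !subr0.
rewrite (gtr0_norm e2) normrN (gtr0_norm e2).
have -> : (- (e / 2))^-1 * (e / 2) = -1 by field; lra.
have -> : (e / 2)^-1 * (e / 2) = 1 by field; lra.
have ee : e / 2 < e by lra.
move=> /(_ ee) H1 /(_ ee) H2.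
have n1 : - (e/2) != 0 by rewrite oppr_eq0 gt_eqF.
have n2 : (e/2) != 0 by rewrite gt_eqF.
move: (H1 n1) (H2 n2); rewrite !ltr_norml; lra.
Qed.

Definition det2 (H : 'M[R]_2) := H 0 0 * H 1 1 - H 0 1 * H 1 0.
Definition pd2 (H : 'M[R]_2) := H 0 1 = H 1 0 /\ 0 < H 0 0 /\ 0 < det2 H.

Lemma upd_explicit (H : 'M[R]_2) (s y : 'cV[R]_2) :
  let r := (dotv s y)^-1 in
  let V00 := 1 - r * (s 0 0 * y 0 0) in
  let V01 := - (r * (s 0 0 * y 1 0)) in
  let V10 := - (r * (s 1 0 * y 0 0)) in
  let V11 := 1 - r * (s 1 0 * y 1 0) in
  let B := bfgs_update H s y in
  [/\ B 0 0 = V00 * H 0 0 * V00 + V00 * H 0 1 * V01 + V01 * H 1 0 * V00 + V01 * H 1 1 * V01 + r * (s 0 0 * s 0 0),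
      B 0 1 = V00 * H 0 0 * V10 + V00 * H 0 1 * V11 + V01 * H 1 0 * V10 + V01 * H 1 1 * V11 + r * (s 0 0 * s 1 0),
      B 1 0 = V10 * H 0 0 * V00 + V10 * H 0 1 * V01 + V11 * H 1 0 * V00 + V11 * H 1 1 * V01 + r * (s 1 0 * s 0 0) &
      B 1 1 = V10 * H 0 0 * V10 + V10 * H 0 1 * V11 + V11 * H 1 0 * V10 + V11 * H 1 1 * V11 + r * (s 1 0 * s 1 0)].
Proof.
move=> r V00 V01 V10 V11 B.
rewrite /B !upd_entry /=.
split; rewrite /V00 /V01 /V10 /V11 /r /=; ring.
Qed.
Lemma quadE (H : 'M[R]_2) (z : 'cV[R]_2) : dotv z (H *m z) =
  z 0 0 * (H 0 0 * z 0 0 + H 0 1 * z 1 0) + z 1 0 * (H 1 0 * z 0 0 + H 1 1 * z 1 0).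
Proof.
rewrite dotv2 !mxE; do 2 rewrite ?big_ord_recl ?big_ord0 ?mxE /=.
have -> : lift ord0 ord0 = 1 :> 'I_2 by apply/val_inj.
ring.
Qed.

Lemma col2_00 (a b : R) : (\col_i (if i == 0 then a else b) : 'cV[R]_2) 0 0 = a.
Proof. by rewrite mxE. Qed.
Lemma col2_10 (a b : R) : (\col_i (if i == 0 then a else b) : 'cV[R]_2) 1 0 = b.
Proof. by rewrite mxE. Qed.

Lemma posdef_pd2 (H : 'M[R]_2) : posdef H -> pd2 H.
Proof.
move=> [HT Hp].
have sym : H 0 1 = H 1 0 by rewrite -[in LHS]HT mxE.
have h0 : 0 < H 0 0.
  have := Hp (\col_i (if i == 0 then 1 else 0)).
  rewrite quadE !col2_00 !col2_10.
  have nz : (\col_i (if i == 0 then 1 else 0) : 'cV[R]_2) != 0.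
    apply/negP => /eqP/matrixP/(_ 0 0); rewrite !mxE /=; apply/eqP; exact: oner_neq0.
  move=> /(_ nz); lra.
split => //; split => //.
have nz : (\col_i (if i == 0 then H 0 1 else - H 0 0) : 'cV[R]_2) != 0.
  apply/negP => /eqP/matrixP/(_ 1 0); rewrite !mxE /= => /eqP.
  rewrite oppr_eq0; apply/negP; exact: lt0r_neq0.
have := Hp _ nz; rewrite quadE !col2_00 !col2_10 /det2 => q.
have : 0 < H 0 0 * (H 0 0 * H 1 1 - H 0 1 * H 1 0) by rewrite sym in q *; nra.
by rewrite pmulr_rgt0.
Qed.

Lemma pd2_quad (H : 'M[R]_2) a b : pd2 H ->
  H 0 0 * (a * (H 0 0 * a + H 0 1 * b) + b * (H 1 0 * a + H 1 1 * b)) =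
  (H 0 0 * a + H 0 1 * b) ^+ 2 + det2 H * b ^+ 2.
Proof. by move=> [sym _]; rewrite /det2 sym; ring. Qed.

Lemma pd2_quad_ge0 (H : 'M[R]_2) a b : pd2 H ->
  0 <= a * (H 0 0 * a + H 0 1 * b) + b * (H 1 0 * a + H 1 1 * b).
Proof.
move=> P; have E := @pd2_quad H a b P; case: P => _ [h0 d0].
have : 0 <= H 0 0 * (a * (H 0 0 * a + H 0 1 * b) + b * (H 1 0 * a + H 1 1 * b)).
  rewrite E; apply: addr_ge0; first exact: sqr_ge0.
  by apply: mulr_ge0; [exact: ltW | exact: sqr_ge0].
by rewrite pmulr_rge0.
Qed.

Lemma pd2_quad_gt0 (H : 'M[R]_2) a b : pd2 H -> b != 0 ->
  0 < a * (H 0 0 * a + H 0 1 * b) + b * (H 1 0 * a + H 1 1 * b).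
Proof.
move=> P b0; have E := @pd2_quad H a b P; case: P => _ [h0 d0].
have : 0 < H 0 0 * (a * (H 0 0 * a + H 0 1 * b) + b * (H 1 0 * a + H 1 1 * b)).
  rewrite E; apply: ltr_wpDl; first exact: sqr_ge0.
  by apply: mulr_gt0 => //; rewrite exprn_even_gt0.
by rewrite pmulr_rgt0.
Qed.
Lemma adj_pos (H : 'M[R]_2) (a0 a1 : R) : pd2 H -> (a0 != 0) || (a1 != 0) ->
  0 < H 1 1 * a0 ^+ 2 - 2 * H 0 1 * a0 * a1 + H 0 0 * a1 ^+ 2.
Proof.
move=> [sym [h0 d0]] nz.
have E : H 0 0 * (H 1 1 * a0 ^+ 2 - 2 * H 0 1 * a0 * a1 + H 0 0 * a1 ^+ 2) =
  (H 0 0 * a1 - H 0 1 * a0) ^+ 2 + det2 H * a0 ^+ 2 by rewrite /det2 sym; ring.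
suff : 0 < H 0 0 * (H 1 1 * a0 ^+ 2 - 2 * H 0 1 * a0 * a1 + H 0 0 * a1 ^+ 2)
  by rewrite pmulr_rgt0.
rewrite E.
have [a00|a00] := eqVneq a0 0.
  move: nz; rewrite a00 eqxx /= => a10.
  rewrite !(expr0n, mulr0, addr0, subr0) /=.
  by rewrite exprn_even_gt0 // mulf_neq0 // gt_eqF.
apply: ltr_wpDl; first exact: sqr_ge0.
by apply: mulr_gt0 => //; rewrite exprn_even_gt0.
Qed.

Lemma pd2_update (H : 'M[R]_2) (s y : 'cV[R]_2) : pd2 H -> 0 < dotv s y ->
  pd2 (bfgs_update H s y).
Proof.
move=> P Dp; have [sym [h0 d0]] := P.
have [E00 E01 E10 E11] := upd_explicit H s y.
have Dn : dotv s y != 0 by rewrite gt_eqF.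
have snz : (s 0 0 != 0) || (s 1 0 != 0).
  rewrite -negb_and; apply/negP => /andP[/eqP a0 /eqP a1].
  by move: Dn; rewrite dotv2 a0 a1 !mul0r addr0 eqxx.
split; [|split].
- rewrite E01 E10 sym; ring.
- rewrite E00.
  have [a0|a0] := eqVneq (s 0 0) 0.
    rewrite a0 !(mul0r, mulr0, subr0, oppr0, addr0, mulr1, add0r) /=. by rewrite mul1r.
  have q := @pd2_quad_ge0 H (1 - (dotv s y)^-1 * (s 0 0 * y 0 0)) (- ((dotv s y)^-1 * (s 0 0 * y 1 0))) P.
  have r0 : 0 < (dotv s y)^-1 * (s 0 0 * s 0 0).
    by apply: mulr_gt0; [rewrite invr_gt0 | rewrite -expr2 exprn_even_gt0].
  move: q r0. generalize ((dotv s y)^-1) => r. move=> q r0.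
  lra.
- have detE : det2 (bfgs_update H s y) =
    (H 1 1 * s 0 0 ^+ 2 - 2 * H 0 1 * s 0 0 * s 1 0 + H 0 0 * s 1 0 ^+ 2) / dotv s y.
    rewrite /det2 E00 E01 E10 E11 sym.
    by rewrite dotv2 in Dn *; field.
  rewrite detE divr_gt0 //; exact: adj_pos.
Qed.
Lemma det_update (H : 'M[R]_2) (s y : 'cV[R]_2) : H 0 1 = H 1 0 -> dotv s y != 0 ->
  det2 (bfgs_update H s y) =
    (H 1 1 * s 0 0 ^+ 2 - 2 * H 0 1 * s 0 0 * s 1 0 + H 0 0 * s 1 0 ^+ 2) / dotv s y.
Proof.
move=> sym Dn; have [E00 E01 E10 E11] := upd_explicit H s y.
rewrite /det2 E00 E01 E10 E11 sym.
by rewrite dotv2 in Dn *; field.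
Qed.

Lemma regime_upd (H : 'M[R]_2) (s y : 'cV[R]_2) : H 0 1 = H 1 0 ->
  y 1 0 = 0 -> y 0 0 = 2 * s 0 0 -> s 0 0 != 0 ->
  bfgs_update H s y 0 0 = 2^-1 /\
  (H 0 0 = 2^-1 -> det2 H <= det2 (bfgs_update H s y)).
Proof.
move=> sym y1 y0 s0.
have DE : dotv s y = 2 * s 0 0 ^+ 2 by rewrite dotv2 y1 y0 mulr0 addr0; ring.
have Dn : dotv s y != 0 by rewrite DE mulf_neq0 // ?expf_neq0 // pnatr_eq0.
have [E00 _ _ _] := upd_explicit H s y.
split.
  rewrite E00 DE y1 y0; field; exact: s0.
move=> h0; rewrite det_update // DE h0 /det2 h0 sym.
rewrite -subr_ge0.
have -> : (H 1 1 * s 0 0 ^+ 2 - 2 * H 1 0 * s 0 0 * s 1 0 + 2^-1 * s 1 0 ^+ 2) / (2 * s 0 0 ^+ 2) -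
  (2^-1 * H 1 1 - H 1 0 * H 1 0) = (s 1 0 - 2 * H 1 0 * s 0 0) ^+ 2 / (4 * s 0 0 ^+ 2).
  by field.
by apply: divr_ge0; [exact: sqr_ge0 | apply: mulr_ge0 => //; exact: sqr_ge0].
Qed.

Lemma ord2_cases (i : 'I_2) : i = 0 \/ i = 1.
Proof. case: i => [[|[|k]]] Hk; [left|right|] => //; exact: val_inj. Qed.

Lemma extract (x : nat -> 'cV[R]_2) (M : R) :
  (forall k, `|x k 0 0| <= M) ->
  (forall e, 0 < e -> forall N, exists k, (N <= k)%N /\ `|x k 1 0| < e) ->
  exists (phi : nat -> nat) (p : 'cV[R]_2),
    {homo phi : i j / (i < j)%N >-> (i < j)%N} /\
    (x \o phi) @ \oo --> p /\ p 1 0 = 0.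
Proof.
move=> Mb Hv.
have G : forall j N, {k | (N <= k)%N /\ `|x k 1 0| < j.+1%:R^-1}.
  move=> j N; apply: cid; apply: Hv; by rewrite invr_gt0 ltr0n.
pose psi := fix psi j := if j is j'.+1 then sval (G j (psi j').+1) else sval (G 0 0%N).
have psiS j : (psi j < psi j.+1)%N by exact: (proj1 (svalP (G j.+1 (psi j).+1))).
have psiv j : `|x (psi j) 1 0| < j.+1%:R^-1.
  by case: j => [|j]; [exact: (proj2 (svalP (G 0 0%N))) | exact: (proj2 (svalP (G j.+1 (psi j).+1)))].
have psih : {homo psi : i j / (i < j)%N >-> (i < j)%N} by apply: homo_ltn psiS => ? ? ?; exact: ltn_trans.
have bnd : bounded_fun (fun j => x (psi j) 0 0).
  exists M; split; first exact: num_real.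
  by move=> M' MM' t _ /=; apply: le_trans (Mb _) (ltW MM').
have [f finc fcvg] := bolzano_weierstrass bnd.
have [l Hl] := (cvg_ex _).1 fcvg.
have fh : {homo f : i j / (i < j)%N >-> (i < j)%N}.
  by move=> i j; rewrite (leqW_mono finc).
have fge t : (t <= f t)%N.
  elim: t => [|t IH] //; apply: leq_ltn_trans IH (fh _ _ (ltnSn t)).
exists (psi \o f), (\col_i (if i == 0 then l else 0)).
split; first by move=> i j ij; apply: psih; apply: fh.
split; last by rewrite mxE.
apply/cvg_ballP => e e0.
move/cvg_ballP: Hl => /(_ e e0) Hl.
near=> t.
split => // i j; rewrite (ord1 j) mxE.
case: (ord2_cases i) => ->.
  by near: t; apply: filterS Hl.
rewrite /=. rewrite /ball /= sub0r normrN.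
apply: lt_le_trans (psiv _) _.
have : e^-1 <= t%:R by near: t; exact: nbhs_infty_ger.
have : t%:R <= (f t)%:R :> R by rewrite ler_nat fge.
move=> h1 h2.
rewrite -[e]invrK lef_pV2 ?posrE ?invr_gt0 //.
rewrite -natr1; lra.
Unshelve. all: by end_near.
Qed.
Lemma no_inf_dec (F : nat -> R) (c : R) (P : nat -> Prop) :
  (forall k, 0 <= F k) -> (forall k, F k.+1 <= F k) -> 0 < c ->
  (forall k, P k -> F k.+1 <= F k - c) ->
  (forall N, exists k, (N <= k)%N /\ P k) -> False.
Proof.
move=> F0 Fdec c0 HP Hinf.
have mono i j : (i <= j)%N -> F j <= F i.
  move=> /subnK <-; elim: (j - i)%N => [|m IH]; first by rewrite add0n.
  by rewrite addSn; apply: le_trans (Fdec _) IH.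
have claim m : exists k, F k <= F 0%N - m%:R * c.
  elim: m => [|m [k Hk]]; first by exists 0%N; rewrite mul0r subr0.
  have [j [kj Pj]] := Hinf k.
  exists j.+1; apply: le_trans (HP _ Pj) _.
  have := mono _ _ kj; rewrite -natr1 mulrDl mul1r; lra.
have ge0 : 0 <= F 0%N / c by rewrite divr_ge0 // ltW.
have [k Hk] := claim (Num.Def.archi_bound (F 0%N / c)).
have := archi_boundP ge0; rewrite ltr_pdivrMr // => H.
have := F0 k; lra.
Qed.
Lemma key_ineq (nu x sg c d t s0 s1 A : R) :
  0 < nu -> nu < 1 -> sg ^+ 2 = 1 -> 0 <= t ->
  2^-1 * (2 * x) + c * sg = - (t * s0) ->
  c * (2 * x) + d * sg = - (t * s1) ->
  A = - (2 * x * s0 + sg * s1) -> 0 <= A ->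
  (1 - nu) * A <= 2 * s0 ^+ 2 ->
  8 * (1 - nu) * (2^-1 * d - c * c) <= A.
Proof.
move=> nu0 nu1 sg2 t0 e1 e2 EA A0 W.
have E1 : t * A = 2 * (t * s0) ^+ 2 + 2 * (2^-1 * d - c * c).
  have ts0 : t * s0 = - (x + c * sg) by rewrite -[t * s0]opprK -e1; field.
  have ts1 : t * s1 = - (2 * c * x + d * sg) by rewrite -[t * s1]opprK -e2; ring.
  rewrite EA (_ : t * - (2 * x * s0 + sg * s1) = - (2 * x * (t * s0) + sg * (t * s1))); last by ring.
  rewrite ts0 ts1.
  apply/eqP; rewrite -subr_eq0; apply/eqP.
  transitivity ((d - 2 * c ^+ 2) * (sg ^+ 2 - 1)); first by field.
  by rewrite sg2 subrr mulr0.
have W2 : (1 - nu) * A * t ^+ 2 <= 2 * (t * s0) ^+ 2.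
  have tt := sqr_ge0 t.
  have h := ler_wpM2r tt W.
  apply: le_trans h _; rewrite le_eqVlt; apply/orP; left; apply/eqP; ring.
have H1 : 2 * (2^-1 * d - c * c) <= A * t * (1 - (1 - nu) * t).
  have -> : A * t * (1 - (1 - nu) * t) = t * A - (1 - nu) * A * t ^+ 2 by ring.
  have -> : 2 * (2^-1 * d - c * c) = t * A - 2 * (t * s0) ^+ 2 by rewrite E1; ring.
  by rewrite lerD2l lerN2.
have H2 : 4 * (1 - nu) * (t * (1 - (1 - nu) * t)) <= 1.
  have : 0 <= (1 - 2 * (1 - nu) * t) ^+ 2 by exact: sqr_ge0.
  nra.
nra.
Qed.
End S.
Arguments pd2 {R}.
Arguments det2 {R}.

Lemma mulmx2 (R : realType) (H : 'M[R]_2) (g : 'cV[R]_2) i :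
  (H *m g) i 0 = H i 0 * g 0 0 + H i 1 * g 1 0.
Proof.
rewrite !mxE; do 2 rewrite ?big_ord_recl ?big_ord0 /=.
have -> : lift ord0 ord0 = 1 :> 'I_2 by apply/val_inj.
by rewrite addr0.
Qed.

Lemma sg_facts (R : realType) (v : R) : v != 0 ->
  Num.sg v ^+ 2 = 1 /\ `|v| = Num.sg v * v /\ (Num.sg v = 1 \/ Num.sg v = -1).
Proof.
move=> v0; split; last split; first 2 last.
- by case: (ltrgt0P v) v0 => // vp _; [left; rewrite gtr0_sg | right; rewrite ltr0_sg].
- by case: (ltrgt0P v) v0 => // vp _; [rewrite gtr0_sg // expr1n | rewrite ltr0_sg // sqrrN expr1n].
- exact: normrEsg.
Qed.

Lemma mxsubE {R : realType} (A B : 'cV[R]_2) i j : (A - B) i j = A i j - B i j.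
Proof. by rewrite !mxE. Qed.

Lemma dot_formula {R : realType} {s Ga Gb : 'cV[R]_2} {a0 a1 b0 b1 c0 c1 : R} :
  s 0 0 = a0 -> s 1 0 = a1 -> Ga 0 0 = b0 -> Ga 1 0 = b1 -> Gb 0 0 = c0 -> Gb 1 0 = c1 ->
  dotv s (Ga - Gb) = a0 * (b0 - c0) + a1 * (b1 - c1).
Proof. by move=> h1 h2 h3 h4 h5 h6; rewrite dotv2 !mxsubE h1 h2 h3 h4 h5 h6. Qed.

Lemma sub_formula {R : realType} {G1 G2 : 'cV[R]_2} {i : 'I_2} {a b : R} :
  G1 i 0 = a -> G2 i 0 = b -> (G1 - G2) i 0 = a - b.
Proof. by move=> h1 h2; rewrite mxsubE h1 h2. Qed.

Lemma subst2 {R : realType} {nu a b a' b' : R} : nu * a <= b -> a = a' -> b = b' -> nu * a' <= b'.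
Proof. by move=> h <- <-. Qed.

Theorem corollary4p4 (R : realType) (x : nat -> 'cV[R]_2) :
  BFGS_sequence (@f_ex R) x ->
  exists (phi : nat -> nat) (p : 'cV[R]_2),
    {homo phi : i j / (i < j)%N >-> (i < j)%N} /\
    (x \o phi) @ \oo --> p /\ p 1 0 = 0.
Proof.
move=> [Hd [mu [nu [H0 [mu0 munu nu1 pdH0 Hk]]]]].
have vnz k : x k 1 0 != 0 by apply: nondiff; exact: (proj1 (Hd k)).
have g0 k : grad (@f_ex R) (x k) 0 0 = 2 * x k 0 0 by apply: grad0; exact: (proj1 (Hd k)).
have g1 k : grad (@f_ex R) (x k) 1 0 = Num.sg (x k 1 0) by apply: grad1; [exact: (proj1 (Hd k)) | exact: vnz].
pose F k := f_ex (x k).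
pose sg k := Num.sg (x k 1 0).
pose s0 k := x k.+1 0 0 - x k 0 0.
pose s1 k := x k.+1 1 0 - x k 1 0.
pose A k := - (2 * x k 0 0 * s0 k + sg k * s1 k).
pose Hs k := bfgs_H (@f_ex R) x H0 k.
have sgf k : sg k ^+ 2 = 1 /\ `|x k 1 0| = sg k * x k 1 0 /\ (sg k = 1 \/ sg k = -1).
  exact: sg_facts.
have FE k : F k = x k 0 0 ^+ 2 + `|x k 1 0| by [].
have F0 k : 0 <= F k by rewrite FE; apply: addr_ge0; [exact: sqr_ge0 | exact: normr_ge0].
have dgs k : dotv (grad (@f_ex R) (x k)) (bfgs_s x k) = - A k.
  by rewrite dotv2 g0 g1 /bfgs_s !mxE /A opprK.
have dgs' k : dotv (grad (@f_ex R) (x k.+1)) (bfgs_s x k) = 2 * x k.+1 0 0 * s0 k + sg k.+1 * s1 k.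
  by rewrite dotv2 g0 g1 /bfgs_s !mxE.
have Arm k : F k.+1 <= F k - mu * A k.
  case: (Hk k) => _ h _.
  have h' : F k.+1 <= F k + mu * dotv (grad (@f_ex R) (x k)) (bfgs_s x k) := h.
  by rewrite (dgs k) mulrN in h'.
have Wol k : - nu * A k <= 2 * x k.+1 0 0 * s0 k + sg k.+1 * s1 k.
  case: (Hk k) => _ _ h.
  have := subst2 h (dgs k) (dgs' k).
  by rewrite mulrN mulNr.
have Dir k : exists t, 0 <= t /\
    Hs k 0 0 * (2 * x k 0 0) + Hs k 0 1 * sg k = - (t * s0 k) /\
    Hs k 1 0 * (2 * x k 0 0) + Hs k 1 1 * sg k = - (t * s1 k).
  have [[t [t0 E]] _ _] := Hk k.
  exists t; split => //; split.
    move/(congr1 (fun M : 'cV[R]_2 => M 0 0)): E.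
    by rewrite (mulmx2 _ _ _ 0) (g0 k) (g1 k) !mxE.
  move/(congr1 (fun M : 'cV[R]_2 => M 1 0)): E.
  by rewrite (mulmx2 _ _ _ 1) (g0 k) (g1 k) !mxE.
have subg k : F k - A k <= F k.+1.
  have [sg2 [nv _]] := sgf k.
  have nv' : sg k * x k.+1 1 0 <= `|x k.+1 1 0|.
    have [_ [_ [->|->]]] := sgf k; rewrite ?mul1r ?mulN1r; [exact: ler_norm | rewrite -normrN; exact: ler_norm].
  have E : F k - A k = x k.+1 0 0 ^+ 2 - s0 k ^+ 2 + sg k * x k.+1 1 0.
    by rewrite FE nv /A /s0 /s1; ring.
  rewrite E FE; have := sqr_ge0 (s0 k); lra.
have A0 k : 0 <= A k.
  have h : 0 <= (1 - mu) * A k.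
    rewrite mulrBl mul1r; have := Arm k; have := subg k; lra.
  by rewrite pmulr_rge0 in h; lra.
have Fdec k : F k.+1 <= F k.
  have := Arm k; have := mulr_ge0 (ltW mu0) (A0 k); lra.
have ye k i : bfgs_y (@f_ex R) x k i 0 = grad (@f_ex R) (x k.+1) i 0 - grad (@f_ex R) (x k) i 0.
  by rewrite /bfgs_y mxsubE.
have se k i : bfgs_s x k i 0 = x k.+1 i 0 - x k i 0 by rewrite /bfgs_s mxsubE.
have dsy k : dotv (bfgs_s x k) (bfgs_y (@f_ex R) x k) = (2 * x k.+1 0 0 * s0 k + sg k.+1 * s1 k) + A k.
  rewrite /bfgs_y (dot_formula (se k 0) (se k 1) (g0 k.+1) (g1 k.+1) (g0 k) (g1 k)) /A /s0 /s1 /sg; ring.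
have sgnz k : sg k != 0 by have [_ [_ [->|->]]] := sgf k; rewrite ?oppr_eq0 oner_neq0.
have Apos k : pd2 (Hs k) -> 0 < A k.
  move=> P; have [t [t0 [e1 e2]]] := Dir k.
  have q := @pd2_quad_gt0 R (Hs k) (2 * x k 0 0) (sg k) P (sgnz k).
  rewrite e1 e2 in q.
  have tA : 0 < t * A k by move: q; rewrite /A; congr (0 < _); ring.
  rewrite lt_neqAle A0 andbT; apply/eqP => Ae; move: tA; by rewrite -Ae mulr0 ltxx.
have dsyp k : pd2 (Hs k) -> 0 < dotv (bfgs_s x k) (bfgs_y (@f_ex R) x k).
  move=> P; rewrite dsy; have := Wol k.
  have h : 0 < A k - nu * A k.
    by rewrite -{1}(mul1r (A k)) -mulrBl; apply: mulr_gt0; [rewrite subr_gt0 | exact: Apos].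
  rewrite mulNr; lra.
have pdk k : pd2 (Hs k).
  elim: k => [|k IH]; first exact: posdef_pd2.
  by apply: pd2_update => //; exact: dsyp.
have Fle i j : (i <= j)%N -> F j <= F i.
  move=> /subnK <-; elim: (j - i)%N => [|m IH]; first by rewrite add0n.
  by rewrite addSn; apply: le_trans (Fdec _) IH.
have [caseA|caseB] := pselect (forall e : R, 0 < e -> forall N, exists k, (N <= k)%N /\ `|x k 1 0| < e).
  apply: (@extract R x (1 + F 0%N)) => // k.
  have h1 : x k 0 0 ^+ 2 <= F 0%N.
    apply: le_trans (Fle 0%N k (leq0n k)); rewrite FE lerDl; exact: normr_ge0.
  have h2 := F0 0%N.
  have h3 : `|x k 0 0| ^+ 2 = x k 0 0 ^+ 2 by rewrite real_normK // num_real.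
  have h4 := normr_ge0 (x k 0 0).
  nra.
exfalso.
have [e [N [e0 He]]] : exists e N, 0 < e /\ forall k, (N <= k)%N -> e <= `|x k 1 0|.
  apply: contrapT => Hn; apply: caseB => e e0 N; apply: contrapT => Hn2.
  apply: Hn; exists e, N; split => // k Nk; rewrite leNgt; apply/negP => Hlt.
  by apply: Hn2; exists k.
have mu1 : 0 < 1 - mu by rewrite subr_gt0; apply: lt_trans munu nu1.
pose c := mu * (2 * e) / (1 - mu).
have c0 : 0 < c by apply: divr_gt0 => //; apply: mulr_gt0 => //; lra.
have sw k : (N <= k)%N /\ sg k.+1 != sg k -> F k.+1 <= F k - c.
  move=> [Nk ne].
  have [_ [nv sv]] := sgf k; have [_ [nv' sv']] := sgf k.+1.
  have opp : sg k.+1 = - sg k.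
    by move: ne; case: sv => ->; case: sv' => ->; rewrite ?eqxx ?opprK.
  have E : F k.+1 = F k - A k + s0 k ^+ 2 + 2 * `|x k.+1 1 0|.
    by rewrite !FE nv' nv opp /A /s0 /s1; ring.
  have hA : 2 * e <= (1 - mu) * A k.
    have := Arm k; have := He _ (leqW Nk); have := sqr_ge0 (s0 k).
    rewrite E mulrBl mul1r; lra.
  have : c <= mu * A k.
    rewrite /c ler_pdivrMr // -mulrA; apply: ler_wpM2l; [exact: ltW | by rewrite [A k * _]mulrC].
  have := Arm k; lra.
have [M1 HM1] : exists M1, forall k, (M1 <= k)%N -> ~ ((N <= k)%N /\ sg k.+1 != sg k).
  apply: contrapT => Hn.
  apply: (@no_inf_dec R F c _ F0 Fdec c0 sw) => M.
  apply: contrapT => Hn2; apply: Hn; exists M => k Mk Pk; apply: Hn2; exists k; by split.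
pose M := maxn N M1.
have same k : (M <= k)%N -> sg k.+1 = sg k.
  move=> Mk; apply/eqP; apply/negPn/negP => ne.
  move: Mk; rewrite geq_max => /andP[Nk M1k].
  by apply: (HM1 k M1k).
have wreg k : (M <= k)%N -> (1 - nu) * A k <= 2 * s0 k ^+ 2.
  move=> Mk; have := Wol k; rewrite (same k Mk).
  have -> : 2 * x k.+1 0 0 * s0 k + sg k * s1 k = 2 * s0 k ^+ 2 - A k by rewrite /A /s0; ring.
  rewrite mulrBl mul1r mulNr; lra.
have reg k : (M <= k)%N -> [/\ bfgs_y (@f_ex R) x k 1 0 = 0,
    bfgs_y (@f_ex R) x k 0 0 = 2 * bfgs_s x k 0 0 & bfgs_s x k 0 0 != 0].
  move=> Mk; split.
  - rewrite /bfgs_y (sub_formula (g1 k.+1) (g1 k)).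
    by have := same k Mk; rewrite /sg => ->; rewrite subrr.
  - rewrite /bfgs_y (sub_formula (g0 k.+1) (g0 k)) [in RHS](se k 0); ring.
  - rewrite (se k 0) -/(s0 k); apply/negP => /eqP z.
    have := wreg k Mk; rewrite z expr0n /= mulr0 => h.
    have : 0 < (1 - nu) * A k by apply: mulr_gt0; [rewrite subr_gt0 | exact: Apos].
    lra.
have HsS k : Hs k.+1 = bfgs_update (Hs k) (bfgs_s x k) (bfgs_y (@f_ex R) x k) by [].
have h00 k : (M <= k)%N -> Hs k.+1 0 0 = 2^-1.
  move=> Mk; have [y1 y0 s0nz] := reg k Mk; have [sym _] := pdk k.
  rewrite HsS; exact: (proj1 (@regime_upd R (Hs k) (bfgs_s x k) (bfgs_y (@f_ex R) x k) sym y1 y0 s0nz)).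
have detinc k : (M < k)%N -> det2 (Hs k) <= det2 (Hs k.+1).
  case: k => [//|k] Mk.
  have Mk' : (M <= k.+1)%N by apply: ltnW.
  have [y1 y0 s0nz] := reg k.+1 Mk'; have [sym _] := pdk k.+1.
  rewrite (HsS k.+1).
  apply: (proj2 (@regime_upd R (Hs k.+1) (bfgs_s x k.+1) (bfgs_y (@f_ex R) x k.+1) sym y1 y0 s0nz)).
  exact: h00.
have detM k : (M < k)%N -> det2 (Hs M.+1) <= det2 (Hs k).
  move=> /subnK <-; elim: (k - M.+1)%N => [|m IH]; first by rewrite add0n.
  apply: le_trans IH _; rewrite addSn; apply: detinc.
  by rewrite addnS ltnS leq_addl.
have Dpos : 0 < det2 (Hs M.+1) by have [_ [_ ->]] := pdk M.+1.
pose c' := mu * (8 * (1 - nu) * det2 (Hs M.+1)).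
have c'0 : 0 < c' by apply: mulr_gt0 => //; apply: mulr_gt0 => //; apply: mulr_gt0 => //; rewrite subr_gt0.
apply: (@no_inf_dec R F c' (fun k => (M < k)%N) F0 Fdec c'0).
  move=> k Mk.
  have key : 8 * (1 - nu) * det2 (Hs k) <= A k.
    case: k Mk => [//|k] Mk.
    have [t [t0 [e1 e2]]] := Dir k.+1.
    have [sym _] := pdk k.+1.
    rewrite (h00 k Mk) in e1.
    rewrite -sym in e2.
    have [sg2 _] := sgf k.+1.
    rewrite /det2 (h00 k Mk) -sym.
    apply: (@key_ineq R nu (x k.+1 0 0) (sg k.+1) (Hs k.+1 0 1) (Hs k.+1 1 1) t (s0 k.+1) (s1 k.+1)) => //.
    - exact: lt_trans mu0 munu.
    - exact: wreg (ltnW Mk).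
  have := detM k Mk; have := Arm k.
  have : mu * (8 * (1 - nu) * det2 (Hs M.+1)) <= mu * A k.
    apply: ler_wpM2l; first exact: ltW.
    apply: le_trans key; apply: ler_wpM2l; last exact: detM.
    by apply: mulr_ge0 => //; rewrite subr_ge0 ltW.
  rewrite /c'; lra.
move=> K; exists (maxn K M.+1); split; first exact: leq_maxl.
by rewrite /= leq_max leqnn orbT.
Qed.
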